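(* Let $p$ be a prime greater than $3$ and let $t$ be an indeterminate. Then $$P_{[p/3]}(t)\equiv\sum_{k=0}^{[p/3]}\frac{(3k)!}{k!^3}\Big(\frac{1-t}{54}\Big)^k\pmod p.$$
   Context: $P_n(x)$ denotes the $n$-th Legendre polynomial, defined by $\frac1{\sqrt{1-2xt+t^2}}=\sum_{n\ge0}P_n(x)t^n$; equivalently $P_n(x)=\frac1{2^n}\sum_{k=0}^{[n/2]}\frac{(-1)^k(2n-2k)!}{k!(n-k)!(n-2k)!}x^{n-2k}$. $[x]$ is the greatest integer not exceeding $x$. A congruence between polynomials with rational coefficients having denominators prime to $p$ means coefficientwise congruence modulo $p$. *)

(* Defs.v *)
From mathcomp Require Import all_boot all_order all_algebra.
Set Implicit Arguments. Unset Strict Implicit. Unset Printing Implicit Defensive.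
Import Order.TTheory GRing.Theory Num.Theory.
Local Open Scope ring_scope.

Definition legendreP (n : nat) : {poly rat} :=
  (2%:R ^- n) *: \sum_(k < n./2.+1)
     (((-1) ^+ k * ((2 * n - 2 * k)`!)%:R
        / ((k`!)%:R * ((n - k)`!)%:R * ((n - 2 * k)`!)%:R)) *: 'X^(n - 2 * k)).

Definition pintegral (p : nat) (q : rat) : Prop := ~~ (p %| `|denq q|)%N.

Definition poly_cong_mod (p : nat) (f g : {poly rat}) : Prop :=
  forall i : nat, [/\ pintegral p f`_i, pintegral p g`_i
                    & (p%:Z %| numq (f`_i - g`_i))%Z].

(* Main.v *)
Require Import Defs.
From mathcomp Require Import all_boot all_order all_algebra.
From mathcomp Require Import ring lra zify.
Import GRing.Theory Num.Theory.
Local Open Scope ring_scope.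

Set Implicit Arguments. Unset Strict Implicit.

Definition fr (p : nat) (q : rat) := exists (a b : int),
  ~~ (p%:Z %| b)%Z /\ q = a%:~R / b%:~R.
Definition fz (p : nat) (q : rat) := exists (a b : int),
  [/\ ~~ (p%:Z %| b)%Z, (p%:Z %| a)%Z & q = a%:~R / b%:~R].

Lemma ndvd_mul p (a b : int) : prime p ->
  ~~ (p%:Z %| a)%Z -> ~~ (p%:Z %| b)%Z -> ~~ (p%:Z %| a * b)%Z.
Proof. by move=> hp; rewrite !dvdzE abszM Euclid_dvdM // negb_or => -> ->. Qed.

Lemma ndvd_ne0 p (b : int) : ~~ (p%:Z %| b)%Z -> (b%:~R : rat) != 0.
Proof. by rewrite intr_eq0; apply: contra => /eqP ->; rewrite dvdz0. Qed.

Lemma fr_add p x y : prime p -> fr p x -> fr p y -> fr p (x + y).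
Proof.
move=> hp [a [b [hb ->]]] [c [d [hd ->]]].
exists (a * d + c * b), (b * d); split; first exact: ndvd_mul.
have := ndvd_ne0 hb; have := ndvd_ne0 hd.
rewrite !rmorphD !rmorphM /= => h1 h2; field; by rewrite h1 h2.
Qed.

Lemma fz_add p x y : prime p -> fz p x -> fz p y -> fz p (x + y).
Proof.
move=> hp [a [b [hb ha ->]]] [c [d [hd hc ->]]].
exists (a * d + c * b), (b * d); split; first exact: ndvd_mul.
  by rewrite rpredD // dvdz_mulr.
have := ndvd_ne0 hb; have := ndvd_ne0 hd.
rewrite !rmorphD !rmorphM /= => h1 h2; field; by rewrite h1 h2.
Qed.

Lemma fr_mulz p x (z : int) : fr p x -> fr p (z%:~R * x).
Proof.
move=> [a [b [hb ->]]]; exists (z * a), b; split => //.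
by rewrite rmorphM /= mulrA.
Qed.

Lemma fz_mulz p x (z : int) : fz p x -> fz p (z%:~R * x).
Proof.
move=> [a [b [hb ha ->]]]; exists (z * a), b; split => //.
  by rewrite dvdz_mull.
by rewrite rmorphM /= mulrA.
Qed.

Lemma fr0 p : prime p -> fr p 0.
Proof.
move=> hp; exists 0, 1; split; last by rewrite mul0r.
by rewrite dvdzE /= dvdn1; case: p hp => [|[|]].
Qed.

Lemma fz0 p : prime p -> fz p 0.
Proof.
move=> hp; exists 0, 1; split; last by rewrite mul0r.
  by rewrite dvdzE /= dvdn1; case: p hp => [|[|]].
by rewrite dvdz0.
Qed.

Lemma numden_cross (q : rat) (a b : int) : (b%:~R : rat) != 0 ->
  q = a%:~R / b%:~R -> numq q * b = a * denq q.
Proof.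
move=> hb hq; apply: (@intr_inj rat); rewrite !rmorphM /=.
have hd : ((denq q)%:~R : rat) != 0 by rewrite intr_eq0 denq_neq0.
have e1 : q * (denq q)%:~R = (numq q)%:~R by rewrite -{1}(divq_num_den q) divfK.
have e2 : q * b%:~R = a%:~R by rewrite hq divfK.
rewrite -e1 -e2; ring.
Qed.

Lemma fr_pint p q : prime p -> fr p q -> pintegral p q.
Proof.
move=> hp [a [b [hb hq]]]; rewrite /pintegral.
have h := numden_cross (ndvd_ne0 hb) hq.
apply: contra hb => hpd.
have hdb : (denq q %| b)%Z.
  have : (denq q %| b * numq q)%Z by rewrite mulrC h dvdz_mull.
  rewrite Gauss_dvdzl //.
  by rewrite /coprimez gcdzC /gcdz; have := coprime_num_den q; rewrite /coprime => /eqP ->.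
apply: dvdz_trans hdb; by rewrite dvdzE.
Qed.

Lemma fz_num p q : prime p -> fz p q -> (p%:Z %| numq q)%Z.
Proof.
move=> hp [a [b [hb ha hq]]].
have h := numden_cross (ndvd_ne0 hb) hq.
have : (p%:Z %| numq q * b)%Z by rewrite h dvdz_mulr.
rewrite !dvdzE abszM Euclid_dvdM // => /orP [] //.
by move: hb; rewrite dvdzE => /negbTE ->.
Qed.

Definition Lop (n : nat) (f : {poly rat}) : {poly rat} :=
  (1 - 'X^2) * f^`()^`() - 2%:R * ('X * f^`()) + (n * n.+1)%:R * f.

Lemma coef_Lop n f i : (Lop n f)`_i =
  (i.+2 * i.+1)%:R * f`_i.+2 + ((n * n.+1)%:R - (i * i.+1)%:R) * f`_i.
Proof.
rewrite /Lop !mulr_natl coefD coefB !coefMn mulrBl mul1r coefB coefXnM coefXM.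
rewrite !coef_deriv.
case: i => [|[|i]] /=.
- ring.
- ring.
- rewrite (_ : (i.+2 - 2 = i)%N); last by lia. ring.
Qed.

Lemma LopB n f g : Lop n (f - g) = Lop n f - Lop n g.
Proof. rewrite /Lop !derivB; ring. Qed.

Lemma LopD n f g : Lop n (f + g) = Lop n f + Lop n g.
Proof. rewrite /Lop !derivD; ring. Qed.

Lemma LopZ n a f : Lop n (a *: f) = a *: Lop n f.
Proof. rewrite /Lop !derivZ -!mul_polyC; ring. Qed.

Lemma Lop0 n : Lop n 0 = 0.
Proof. by rewrite /Lop !deriv0 !mulr0 subr0 addr0. Qed.

Lemma Lop_sum n (I : Type) (r : seq I) (P : pred I) (F : I -> {poly rat}) :
  Lop n (\sum_(i <- r | P i) F i) = \sum_(i <- r | P i) Lop n (F i).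
Proof. exact: (big_morph _ (LopD n) (Lop0 n)). Qed.

Lemma Lop_uniq n (f : {poly rat}) : (size f <= n.+1)%N -> f`_n = 0 -> Lop n f = 0 -> f = 0.
Proof.
move=> hs hn hL.
have rec i : (i.+2 * i.+1)%:R * f`_i.+2 + ((n * n.+1)%:R - (i * i.+1)%:R) * f`_i = 0.
  by rewrite -coef_Lop hL coef0.
suff H : forall d i, (n - i <= d)%N -> f`_i = 0.
  by apply/polyP => i; rewrite coef0 (H (n - i)%N).
elim=> [|d IH] i hi.
  case: (ltngtP i n) => hin; [lia| |by rewrite hin].
  by rewrite nth_default //; apply: leq_trans hs _.
case: (leqP (n - i) d) => hd; first exact: IH.
have hin : (i < n)%N by lia.
have h2 := IH i.+2 ltac:(lia).
have := rec i; rewrite h2 mulr0 add0r => /eqP; rewrite mulf_eq0 => /orP [] /eqP //.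
move/eqP; rewrite subr_eq0 eqr_nat => /eqP.
have : (i * i.+1 < n * n.+1)%N by apply: ltn_mul.
lia.
Qed.

Notation Y := ('X - (1 : rat)%:P).

Lemma LY n k : Lop n (Y ^+ k) =
  ((n * n.+1)%:R - (k * k.+1)%:R) *: Y ^+ k - (2 * k * k)%:R *: Y ^+ k.-1.
Proof.
rewrite /Lop !deriv_exp derivXsubC mul1r derivMn deriv_exp derivXsubC mul1r.
have hX : 'X = Y + 1 by rewrite polyC1; ring.
rewrite -!mul_polyC !polyCB !polyC_natr.
rewrite [in X in (1 - X) * _]hX [in X in _ * (X * _)]hX.
move: Y => y.
case: k => [|[|k]] /=.
- rewrite !expr0; ring.
- rewrite !expr0 !expr1; ring.
- rewrite !exprS; ring.
Qed.

Definition cc (n k : nat) : rat := ('C(n, k) * 'C(n + k, k))%:R / 2%:R ^+ k.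

Lemma cc_rec n j : (j < n)%N ->
  cc n j * ((n * n.+1)%:R - (j * j.+1)%:R) = cc n j.+1 * (2 * j.+1 * j.+1)%:R.
Proof.
move=> hj.
have e1 : (j.+1 * 'C(n, j.+1) = (n - j) * 'C(n, j))%N by rewrite mul_bin_left.
have e2 : ((n + j.+1) * 'C(n + j, j) = j.+1 * 'C(n + j.+1, j.+1))%N.
  by rewrite -mul_bin_diag addnS.
move: e1 e2 => /(congr1 (fun m => m%:R : rat)) e1 /(congr1 (fun m => m%:R : rat)) e2.
rewrite !natrM natrB ?(ltnW hj) // in e1; rewrite !natrM natrD in e2.
rewrite /cc !natrM exprS.
have h2 : (2%:R ^+ j : rat) != 0 by rewrite expf_neq0 // pnatr_eq0.
transitivity ((j.+1%:R * 'C(n, j.+1)%:R) * (j.+1%:R * 'C(n + j.+1, j.+1)%:R)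
   / 2%:R ^+ j : rat); last by field.
rewrite e1 -e2; field => //.
Qed.

Definition Qp (n : nat) : {poly rat} := \sum_(k < n.+1) cc n k *: Y ^+ k.

Lemma LQ n : Lop n (Qp n) = 0.
Proof.
rewrite /Qp Lop_sum.
under eq_bigr do rewrite LopZ LY scalerBr !scalerA.
rewrite sumrB; apply/eqP; rewrite subr_eq0; apply/eqP.
rewrite big_ord_recr /= subrr mulr0 scale0r addr0.
rewrite big_ord_recl /= !muln0 mulr0 scale0r add0r.
apply: eq_bigr => j _ /=.
by rewrite /bump /= add1n cc_rec.
Qed.

Definition la (n k : nat) : rat :=
  (-1) ^+ k * ((2 * n - 2 * k)`!)%:R
        / ((k`!)%:R * ((n - k)`!)%:R * ((n - 2 * k)`!)%:R).

Lemma la_rec' i k : let n := (i + 2 * k + 2)%N in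
  (i.+2 * i.+1)%:R * la n k + ((n * n.+1)%:R - (i * i.+1)%:R) * la n k.+1 = 0.
Proof.
rewrite /la /=.
have -> : (2 * (i + 2 * k + 2) - 2 * k = (2 * i + 2 * k + 2).+2)%N by lia.
have -> : (i + 2 * k + 2 - k = (i + k + 1).+1)%N by lia.
have -> : (i + 2 * k + 2 - 2 * k = i.+2)%N by lia.
have -> : (2 * (i + 2 * k + 2) - 2 * k.+1 = (2 * i + 2 * k + 2))%N by lia.
have -> : (i + 2 * k + 2 - k.+1 = (i + k + 1))%N by lia.
have -> : (i + 2 * k + 2 - 2 * k.+1 = i)%N by lia.
rewrite !factS !natrM exprS.
have hF := fact_gt0 (2 * i + 2 * k + 2); have hG := fact_gt0 (i + k + 1).
have hH := fact_gt0 i; have hK := fact_gt0 k.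
field.
by rewrite !paddr_eq0 ?ler01 ?ler0n ?addr_ge0 ?oner_eq0 ?pnatr_eq0 -?lt0n ?hH ?hG ?hK.
Qed.

Lemma coef_leg n i : (legendreP n)`_i =
  2%:R ^- n * \sum_(k < n./2.+1 | (n - 2 * k == i)%N) la n k.
Proof. by rewrite /legendreP coefZ coef_sumMXn. Qed.

Lemma half_bound n (k : 'I_(n./2.+1)) : (2 * k <= n)%N.
Proof.
have := ltn_ord k; rewrite ltnS => hk.
have := odd_double_half n; rewrite -muln2; case: (odd n) => /= h; lia.
Qed.

Lemma leg_at n k : (2 * k <= n)%N -> (legendreP n)`_(n - 2 * k) = 2%:R ^- n * la n k.
Proof.
move=> hk.
have hk' : (k < n./2.+1)%N.
  have := odd_double_half n; rewrite -muln2; case: (odd n) => /= h; lia.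
rewrite coef_leg (big_pred1 (Ordinal hk')) //= => j.
rewrite /= -val_eqE /=.
have := half_bound j; lia.
Qed.

Lemma leg_0 n i : (forall k : 'I_(n./2.+1), (n - 2 * k)%N != i) ->
  (legendreP n)`_i = 0.
Proof. by move=> h; rewrite coef_leg big_pred0 ?mulr0 // => j; apply/negbTE. Qed.

Lemma LP n : Lop n (legendreP n) = 0.
Proof.
apply/polyP => i; rewrite coef_Lop coef0.
case: (boolP [exists k : 'I_(n./2.+1), (n - 2 * k)%N == i]).
  move=> /existsP [k /eqP hki].
  have hk := half_bound k.
  case: (nat_of_ord k) hk hki => [|k'] hk hki.
    have -> : i = n by lia.
    rewrite subrr mul0r addr0 leg_0 ?mulr0 // => j; have := half_bound j; lia.
  have e2 : (legendreP n)`_i.+2 = 2%:R ^- n * la n k'.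
    by rewrite (_ : i.+2 = (n - 2 * k')%N) ?leg_at //; lia.
  have e0 : (legendreP n)`_i = 2%:R ^- n * la n k'.+1 by rewrite -hki leg_at.
  rewrite e2 e0.
  have hn : n = ((n - 2 * k'.+1) + 2 * k' + 2)%N by lia.
  have := la_rec' (n - 2 * k'.+1) k'; rewrite /= -hn hki => h.
  transitivity (2%:R ^- n * (((i.+2 * i.+1)%:R * la n k' +
    ((n * n.+1)%:R - (i * i.+1)%:R) * la n k'.+1)) : rat).
    by ring.
  by rewrite h mulr0.
rewrite negb_exists => /forallP hall.
rewrite (leg_0 (i := i)); last by move=> k; exact: hall.
rewrite leg_0 ?mulr0 ?addr0 //.
move=> k; apply/negP => /eqP hk.
have hb := half_bound k.
have hk1 : (k.+1 < n./2.+1)%N.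
  have := odd_double_half n; rewrite -muln2; case: (odd n) => /= h; lia.
have := hall (Ordinal hk1); rewrite /= => /eqP; apply; lia.
Qed.

Lemma size_leg n : (size (legendreP n) <= n.+1)%N.
Proof.
rewrite /legendreP; apply: leq_trans (size_scale_leq _ _) _.
apply: leq_trans (size_sum _ _ _) _; apply/bigmax_leqP => k _.
apply: leq_trans (size_scale_leq _ _) _; rewrite size_polyXn; lia.
Qed.

Lemma size_Qp n : (size (Qp n) <= n.+1)%N.
Proof.
rewrite /Qp; apply: leq_trans (size_sum _ _ _) _; apply/bigmax_leqP => k _.
apply: leq_trans (size_scale_leq _ _) _; rewrite size_exp_XsubC; exact: ltn_ord.
Qed.

Lemma Qp_lead n : (Qp n)`_n = cc n n.
Proof.
rewrite /Qp coef_sum big_ord_recr /= big1 ?add0r.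
  have hm : Y ^+ n \is monic by apply: monic_exp; apply: monicXsubC.
  move/monicP: hm; rewrite lead_coefE size_exp_XsubC /= => h. rewrite coefZ h mulr1 //.
move=> k _; rewrite coefZ nth_default ?mulr0 // size_exp_XsubC; exact: ltn_ord.
Qed.

Lemma leg_eq n : legendreP n = Qp n.
Proof.
apply/eqP; rewrite -subr_eq0; apply/eqP; apply: (@Lop_uniq n).
- by apply: leq_trans (size_polyD _ _) _; rewrite size_polyN geq_max size_leg size_Qp.
- rewrite coefB Qp_lead.
  have := leg_at (k := 0) (n := n) (leq0n _); rewrite muln0 subn0 => ->.
  rewrite /la /cc !muln0 !subn0 expr0 mul1r fact0 mul1r binn mul1n.
  have hb := bin_fact (leq_addl n n); rewrite addnK in hb.
  rewrite mul2n -addnn -hb !natrM; apply/eqP; rewrite subr_eq0; apply/eqP.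
  have h1 := fact_gt0 n; field.
  by rewrite pnatr_eq0 -lt0n h1 /= expf_neq0 // pnatr_eq0.
- by rewrite LopB LP LQ subrr.
Qed.

Lemma Fp_key p n r : prime p -> p = (3 * n + r)%N -> (r = 1 \/ r = 2)%N ->
  forall k, (k <= n)%N ->
  (('C(n, k) * 'C(n + k, k) * k`! ^ 3 * 27 ^ k)%:R : 'F_p) = (-1) ^+ k * ((3 * k)`!)%:R.
Proof.
move=> hp hpr hr.
have hN : (n%:R * 3%:R + r%:R : 'F_p) = 0.
  by rewrite -natrM -natrD mulnC -hpr pchar_Fp_0.
have key K : (9%:R * (n%:R - K) * (n%:R + K + 1) : 'F_p) = - ((3%:R * K + 1) * (3%:R * K + 2%:R)).
  transitivity ((n%:R * 3%:R - 3%:R * K) * (n%:R * 3%:R + 3%:R * K + 3%:R) : 'F_p); first by ring.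
  have -> : (n%:R * 3%:R : 'F_p) = - r%:R by apply/eqP; rewrite -subr_eq0 opprK hN.
  by case: hr => ->; ring.
elim=> [|k IH] hk.
  by rewrite !bin0 fact0 /= expr0 mul1r.
have IH' := IH (ltnW hk).
have e1 : (k.+1 * 'C(n, k.+1) = (n - k) * 'C(n, k))%N by rewrite mul_bin_left.
have e2 : ((n + k.+1) * 'C(n + k, k) = k.+1 * 'C(n + k.+1, k.+1))%N.
  by rewrite -mul_bin_diag addnS.
move: e1 e2 => /(congr1 (fun m => m%:R : 'F_p)) e1 /(congr1 (fun m => m%:R : 'F_p)) e2.
rewrite !natrM natrB ?(ltnW hk) // in e1; rewrite !natrM natrD in e2.
rewrite (_ : (3 * k.+1 = (3 * k).+3)%N); last by lia.
rewrite !factS.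
move: IH'; move: (k`!) ((3 * k)`!) => f g IH'.
rewrite !natrM !natrX in IH' *.
rewrite !exprS.
move: IH'; set A := (27%:R : 'F_p) ^+ k; move=> IH'.
transitivity ((k.+1%:R * 'C(n, k.+1)%:R) * (k.+1%:R * 'C(n + k.+1, k.+1)%:R) * k.+1%:R
   * (f%:R ^+ 3) * A * 27%:R : 'F_p); first by ring.
rewrite e1 -e2.
transitivity (('C(n, k)%:R * 'C(n + k, k)%:R * f%:R ^+ 3 * A) *
   (9%:R * (n%:R - k%:R) * (n%:R + k%:R + 1)) * (3%:R * k.+1%:R) : 'F_p); first by ring.
rewrite IH' key; ring.
Qed.

Lemma Fp_dvd p (z : int) : prime p -> (z%:~R : 'F_p) = 0 -> (p%:Z %| z)%Z.
Proof.
move=> hp; case: z => m.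
  by move=> /eqP h; rewrite dvdzE /= (dvdn_pcharf (pchar_Fp hp)).
rewrite NegzE mulrNz => /eqP; rewrite oppr_eq0 => h.
by rewrite dvdzE abszN /= (dvdn_pcharf (pchar_Fp hp)).
Qed.

Lemma ndvd_fact p k : prime p -> (k < p)%N -> ~~ (p %| k`!)%N.
Proof.
move=> hp; elim: k => [|k IH] hk; first by rewrite fact0 Euclid_dvd1.
rewrite factS Euclid_dvdM // negb_or IH ?(ltnW hk) // andbT.
by apply/negP => /dvdn_leq h; move: (h isT); lia.
Qed.

Lemma ndvd_2_3 p : prime p -> (3 < p)%N -> ~~ (p %| 2)%N /\ ~~ (p %| 3)%N.
Proof.
move=> hp h3; split; apply/negP => /dvdn_leq h; move: (h isT); lia.
Qed.

Definition dd (k : nat) : rat :=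
  ((3 * k)`!)%:R / ((k`!)%:R ^+ 3) * (- (54%:R)^-1) ^+ k.

Lemma fr_cc p n k : prime p -> (3 < p)%N -> fr p (cc n k).
Proof.
move=> hp h3; exists ('C(n, k) * 'C(n + k, k))%N, (2 ^ k)%N; split.
  rewrite dvdzE /= Euclid_dvdX // negb_and; by case: (ndvd_2_3 hp h3) => ->.
by rewrite /cc -!pmulrn natrX.
Qed.

Lemma e54 k : (- (54%:R : rat)^-1) ^+ k = (-1) ^+ k / (2%:R ^+ k * 27%:R ^+ k).
Proof.
rewrite (_ : 54%:R = 2%:R * 27%:R :> rat); last by rewrite -natrM.
by rewrite -[in LHS]mulN1r exprMn exprVn exprMn.
Qed.

Lemma ndvdB p k : prime p -> (3 < p)%N -> (k < p)%N ->
  ~~ (p%:Z %| (k`! ^ 3 * 54 ^ k)%N%:Z)%Z.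
Proof.
move=> hp h3 hk; rewrite dvdzE /= Euclid_dvdM // !Euclid_dvdX // negb_or !negb_and.
rewrite ndvd_fact //= (_ : 54 = 2 * 3 ^ 3)%N // Euclid_dvdM // Euclid_dvdX //.
by case: (ndvd_2_3 hp h3) => /negbTE -> /negbTE ->.
Qed.

Lemma fr_dd p k : prime p -> (3 < p)%N -> (k < p)%N -> fr p (dd k).
Proof.
move=> hp h3 hk; exists ((-1) ^+ k * ((3 * k)`!)%N%:Z), (k`! ^ 3 * 54 ^ k)%N; split.
  exact: ndvdB.
rewrite /dd e54 rmorphM rmorphXn /= rmorphN1 -!pmulrn !natrM !natrX.
rewrite (_ : 54%:R = 2%:R * 27%:R :> rat) ?exprMn -?natrM //.
have h1 : (k`!%:R : rat) != 0 by rewrite pnatr_eq0 -lt0n fact_gt0.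
field; by rewrite h1 !expf_neq0 // pnatr_eq0.
Qed.

Lemma fz_diff p n r k : prime p -> (3 < p)%N -> p = (3 * n + r)%N -> (r = 1 \/ r = 2)%N ->
  (k <= n)%N -> fz p (cc n k - dd k).
Proof.
move=> hp h3 hpr hr hk.
have hkp : (k < p)%N by lia.
exists (('C(n, k) * 'C(n + k, k) * k`! ^ 3 * 27 ^ k)%N%:Z - (-1) ^+ k * ((3 * k)`!)%N%:Z),
  (k`! ^ 3 * 54 ^ k)%N; split.
- exact: ndvdB.
- apply: Fp_dvd => //.
  rewrite !rmorphB !rmorphM !rmorphXn /= !rmorphN1 -!pmulrn.
  rewrite -(Fp_key hp hpr hr hk); apply/eqP; rewrite subr_eq0; apply/eqP.
  rewrite (natrM _ _ (27 ^ k)) (natrM _ _ (k`! ^ 3)) natrM (natrX _ k`!); ring.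
- rewrite /dd /cc e54 !rmorphB !rmorphM !rmorphXn /= !rmorphN1 -!pmulrn.
  rewrite (natrX _ 27 k) (natrX _ 54 k).
  rewrite (_ : 54%:R = 2%:R * 27%:R :> rat) ?exprMn -?natrM //.
  have h1 : (k`!%:R : rat) != 0 by rewrite pnatr_eq0 -lt0n fact_gt0.
  field; by rewrite h1 !expf_neq0 // pnatr_eq0.
Qed.

Lemma Yint k i : exists z : int, (Y ^+ k)`_i = z%:~R.
Proof.
elim: k i => [|k IH] i.
  by exists (i == 0)%N; rewrite expr0 coef1.
have [z1 h1] := IH i.-1; have [z2 h2] := IH i.
rewrite exprSr polyC1 mulrBr mulr1 coefB coefMX h2.
case: i h1 h2 => [|j] /= h1 h2.
  by exists (- z2); rewrite sub0r rmorphN.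
by exists (z1 - z2); rewrite h1 rmorphB.
Qed.

Unset Implicit Arguments. Set Strict Implicit.


Theorem lemma2p3 (p : nat) (hp : prime p) (hp3 : (3 < p)%N) :
  poly_cong_mod p (legendreP (p %/ 3))
    (\sum_(k < (p %/ 3).+1)
        (((3 * k)`!)%:R / ((k`!)%:R ^+ 3) : rat)
          *: ((54%:R)^-1 *: (1 - 'X)) ^+ k).
Proof.
set n := (p %/ 3)%N.
have hpr : p = (3 * n + p %% 3)%N by rewrite {1}(divn_eq p 3) mulnC.
have hr : (p %% 3 = 1 \/ p %% 3 = 2)%N.
  have h3 : (p %% 3 < 3)%N by rewrite ltn_mod.
  have h0 : (p %% 3 != 0)%N.
    apply/negP => /eqP h.
    have : (3 %| p)%N by rewrite /dvdn h.
    by move/(@prime_nt_dvdP 3 p hp isT) => hh; move: hp3; rewrite -hh.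
  lia.
have hnp : (n < p)%N by lia.
rewrite leg_eq.
have eR : \sum_(k < n.+1) (((3 * k)`!)%:R / ((k`!)%:R ^+ 3) : rat)
          *: ((54%:R)^-1 *: (1 - 'X)) ^+ k = \sum_(k < n.+1) dd k *: Y ^+ k.
  apply: eq_bigr => k _.
  rewrite /dd (_ : (54%:R)^-1 *: (1 - 'X) = (- (54%:R)^-1) *: Y).
    by rewrite exprZn scalerA.
  by rewrite polyC1 scaleNr -scalerN opprB.
rewrite eR /Qp => i.
rewrite !coef_sum.
split.
- apply: fr_pint => //; apply: (big_ind (fr p)); [exact: fr0|move=> ? ?; exact: fr_add|].
  move=> k _; rewrite coefZ; have [z ->] := Yint k i; rewrite mulrC.
  by apply: fr_mulz; apply: fr_cc.
- apply: fr_pint => //; apply: (big_ind (fr p)); [exact: fr0|move=> ? ?; exact: fr_add|].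
  move=> k _; rewrite coefZ; have [z ->] := Yint k i; rewrite mulrC.
  apply: fr_mulz; apply: fr_dd => //; have := ltn_ord k; lia.
- apply: fz_num => //; rewrite -sumrB; apply: (big_ind (fz p)); [exact: fz0|move=> ? ?; exact: fz_add|].
  move=> k _; rewrite !coefZ -mulrBl; have [z ->] := Yint k i; rewrite mulrC.
  apply: fz_mulz; apply: (fz_diff hp hp3 hpr hr); have := ltn_ord k; lia.
Qed.
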